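(* There exists a human–algorithm system (as defined in the context) with $N=2$ regimes in which the unaided human and the algorithm have correlated losses, namely $h_1>h_2$ and $a_1>a_2$ (both have higher loss in regime 1), and which nevertheless exhibits complementarity.
   Context: A human–algorithm system consists of: an integer $N\ge1$ (number of regimes); probabilities $p_1,\dots,p_N\ge 0$ with $\sum_i p_i=1$; algorithmic losses $a_1,\dots,a_N\ge 0$ and unaided-human losses $h_1,\dots,h_N\ge0$; and a combining function $c:[0,\infty)^2\to\mathbb{R}$ satisfying $\min(a,h)\le c(a,h)\le\max(a,h)$ for all $a,h\ge0$, where $c(a_i,h_i)$ is the loss of the combined system in regime $i$. Write $A=\sum_i p_i a_i$ and $H=\sum_i p_i h_i$. The system exhibits complementarity if $\sum_{i=1}^N p_i\,c(a_i,h_i)<\min(A,H)$. *)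

(* Defs.v *)
From Stdlib Require Import Reals Lra.
Open Scope R_scope.

(* Regimes are indexed 1..N.  sum_regimes N f = f 1 + ... + f N. *)
Fixpoint sum_regimes (N : nat) (f : nat -> R) : R :=
  match N with
  | O => 0
  | S n => sum_regimes n f + f (S n)
  end.

Record HASystem := {
  nreg : nat;
  p : nat -> R;   (* regime probabilities *)
  a : nat -> R;   (* algorithmic losses *)
  h : nat -> R;   (* unaided-human losses *)
  c : R -> R -> R
}.

Definition valid_system (S : HASystem) : Prop :=
  (1 <= nreg S)%nat /\
  (forall i, (1 <= i <= nreg S)%nat -> 0 <= p S i) /\
  sum_regimes (nreg S) (p S) = 1 /\
  (forall i, (1 <= i <= nreg S)%nat -> 0 <= a S i /\ 0 <= h S i) /\
  (forall x y, 0 <= x -> 0 <= y -> Rmin x y <= c S x y <= Rmax x y).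

Definition alg_loss (S : HASystem) : R :=
  sum_regimes (nreg S) (fun i => p S i * a S i).
Definition human_loss (S : HASystem) : R :=
  sum_regimes (nreg S) (fun i => p S i * h S i).
Definition combined_loss (S : HASystem) : R :=
  sum_regimes (nreg S) (fun i => p S i * c S (a S i) (h S i)).

Definition complementarity (S : HASystem) : Prop :=
  combined_loss S < Rmin (alg_loss S) (human_loss S).

(* Main.v *)
Require Import Defs.
From Stdlib Require Import Reals Lra Lia.
Open Scope R_scope.

Definition ex_sys : HASystem := {|
  nreg := 2;
  p := fun _ => /2;
  a := fun i => match i with 1%nat => 3 | _ => 0 end;
  h := fun i => match i with 1%nat => 2 | _ => 1 end;
  c := Rmin |}.

Theorem lemma6 :
  exists S : HASystem,
    valid_system S /\ nreg S = 2%nat /\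
    h S 1%nat > h S 2%nat /\ a S 1%nat > a S 2%nat /\
    complementarity S.
Proof.
  exists ex_sys.
  unfold valid_system, complementarity, combined_loss, alg_loss, human_loss; simpl.
  split; [|split; [reflexivity|split; [lra|split; [lra|]]]].
  - split; [lia|]. split; [intros; lra|]. split; [lra|]. split.
    + intros i Hi. destruct i as [|[|[|]]]; lra.
    + intros x y _ _. split; [lra|]. unfold Rmin, Rmax.
      destruct (Rle_dec x y); lra.
  - unfold Rmin. repeat destruct (Rle_dec _ _); lra.
Qed.
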